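(* Let $\mathbb{P}$ be a pre-Pawlikowski lattice satisfying $\mathsf{S}_1(\mathbb{V}_1,\mathbb{V}_1)$. Let $(F_n)_{n\in\omega}$ be a sequence of finite subsets of $\mathbb{P}$ such that for every $p\in\mathbb{P}\setminus\{1\}$ there are infinitely many $n$ with $\sup F_n\not\leq p$. Then there are elements $f_n\in F_n$, $n\in\omega$, such that $\sup_{n\in\omega}f_n=1$.
   Context: A lattice is a poset where any two elements have a supremum and an infimum; it is bounded if it has a minimum $0$ and a maximum $1$. A prime element is $q\neq 1$ with: $a\wedge b\leq q$ implies $a\leq q$ or $b\leq q$. Enough prime elements: whenever $a\not\leq b$ there is a prime $q$ with $b\leq q$, $a\not\leq q$. A pre-Pawlikowski lattice is a bounded lattice with enough prime elements. $\mathbb{V}_1$ is the family of subsets $A\subseteq\mathbb{P}$ with $\sup A=1$. $\mathsf{S}_1(\mathbb{V}_1,\mathbb{V}_1)$ means: for every sequence $(A_n)_{n\in\omega}$ of members of $\mathbb{V}_1$ there are $a_n\in A_n$ with $\sup\{a_n:n\in\omega\}=1$. For a finite set $F$, $\sup F$ denotes its join. *)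

(* Defs.v *)
From HB Require Import structures.
From mathcomp Require Import all_boot all_order.
Set Implicit Arguments. Unset Strict Implicit. Unset Printing Implicit Defensive.
Import Order.Theory.
Local Open Scope order_scope.

(* Bounded lattices are mathcomp's [tbLatticeType d]; 0 = \bot, 1 = \top. *)

Definition is_sup {d : Order.disp_t} {T : porderType d} (A : T -> Prop) (x : T) : Prop :=
  (forall a, A a -> a <= x) /\ (forall y, (forall a, A a -> a <= y) -> x <= y).

Definition sup_is_top {d : Order.disp_t} {T : tbLatticeType d} (A : T -> Prop) : Prop :=
  is_sup A \top.

Definition prime_elt {d : Order.disp_t} {T : tbLatticeType d} (q : T) : Prop :=
  q != \top /\ forall a b : T, a `&` b <= q -> a <= q \/ b <= q.

Definition enough_primes {d : Order.disp_t} {T : tbLatticeType d} : Prop :=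
  forall a b : T, ~~ (a <= b) -> exists q : T, prime_elt q /\ b <= q /\ ~~ (a <= q).

Definition pre_Pawlikowski {d : Order.disp_t} (T : tbLatticeType d) : Prop :=
  @enough_primes d T.

Definition S1_V1_V1 {d : Order.disp_t} (T : tbLatticeType d) : Prop :=
  forall A : nat -> (T -> Prop),
    (forall n, sup_is_top (A n)) ->
    exists a : nat -> T, (forall n, A n (a n)) /\ sup_is_top (fun x => exists n, x = a n).

(* Main.v *)
Require Import Defs.
From HB Require Import structures.
From mathcomp Require Import all_boot all_order.
From Stdlib Require Import Classical ClassicalEpsilon.
Import Order.Theory.
Local Open Scope order_scope.

Lemma sumn_ge (s : seq nat) (x : nat) : x \in s -> (x <= sumn s)%N.
Proof.
elim: s => [|y s IH] //=; rewrite in_cons => /orP [/eqP ->|/IH H].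
  by rewrite leq_addr.
by apply: (leq_trans H); rewrite leq_addl.
Qed.

Lemma prime_meet {d : Order.disp_t} {T : tbLatticeType d} {q : T}
  (Hq : prime_elt q) (s : seq (nat * T)) :
  all (fun p => ~~ (p.2 <= q)) s -> ~~ (\meet_(p <- s) p.2 <= q).
Proof.
case: Hq => Hq1 Hq2.
elim: s => [|p s IH] /=.
  by rewrite big_nil le1x.
case/andP => Hp Hs; rewrite big_cons; apply/negP => /Hq2 [H|H].
  by rewrite H in Hp.
by move: (IH Hs); rewrite H.
Qed.

Theorem lemma2p3 (d : Order.disp_t) (T : tbLatticeType d)
  (HP : pre_Pawlikowski T) (HS : S1_V1_V1 T)
  (F : nat -> seq T) (Fne : forall n, F n != [::])
  (HF : forall p : T, p != \top ->
        forall m : nat, exists n : nat, (m <= n)%N /\ ~~ ((\join_(x <- F n) x) <= p)) :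
  exists f : nat -> T, (forall n, f n \in F n) /\
    sup_is_top (fun x => exists n, x = f n).
Proof.
pose C (j : nat) (x : T) := exists s : seq (nat * T),
  [/\ size s = j.+1, uniq (unzip1 s), all (fun p => p.2 \in F p.1) s
    & x = \meet_(p <- s) p.2].
have HC : forall j, sup_is_top (C j).
  move=> j; split; first by move=> x _; exact: lex1.
  move=> y Hy; apply: contraT => Hn.
  have [q [Hq [Hyq Htq]]] := HP _ _ Hn.
  have Hk : forall k, exists s : seq (nat * T),
      [/\ size s = k, uniq (unzip1 s), all (fun p => p.2 \in F p.1) s
        & all (fun p => ~~ (p.2 <= q)) s].
    elim=> [|k [s [Hs1 Hs2 Hs3 Hs4]]]; first by exists [::].
    have [n [Hmn Hj]] := HF q Hq.1 (sumn (unzip1 s)).+1.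
    have [x xF xq] : exists2 x, x \in F n & ~~ (x <= q).
      apply/allPn/negP => H; move/negP: Hj; apply.
      by rewrite big_seq; apply: joins_le => x /(allP H).
    exists ((n, x) :: s); split => /=.
    - by rewrite Hs1.
    - rewrite Hs2 andbT; apply/negP => /sumn_ge H.
      by move: (leq_trans Hmn H); rewrite ltnn.
    - by rewrite xF Hs3.
    - by rewrite xq Hs4.
  have [s [Hs1 Hs2 Hs3 Hs4]] := Hk j.+1.
  have Hle : \meet_(p <- s) p.2 <= q.
    by apply: le_trans (Hy _ _) Hyq; exists s.
  by move: (prime_meet Hq s Hs4); rewrite Hle.
have [a [Ha Hsup]] := HS C HC.
have Xs : forall j, {s : seq (nat * T) |
  [/\ size s = j.+1, uniq (unzip1 s), all (fun p => p.2 \in F p.1) s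
    & a j = \meet_(p <- s) p.2]}.
  by move=> j; apply: constructive_indefinite_description; exact: Ha.
pose s j := proj1_sig (Xs j).
pose pp j (prev : seq nat) := head (0%N, \top) [seq p <- s j | p.1 \notin prev].
have Hpp : forall j prev, size prev = j -> pp j prev \in s j /\ (pp j prev).1 \notin prev.
  move=> j prev Hsz.
  have [Hs1 Hs2 _ _] := proj2_sig (Xs j).
  have Hhas : has (fun p => p.1 \notin prev) (s j).
    apply: contraT => /hasPn H.
    have Hsub : {subset unzip1 (s j) <= prev}.
      move=> n /mapP [p Hp ->]; move: (H p Hp); by rewrite negbK.
    move: (uniq_leq_size Hs2 Hsub); by rewrite size_map Hs1 Hsz ltnn.
  move: Hhas; rewrite has_filter /pp.
  case E: [seq p <- s j | p.1 \notin prev] => [|x r] // _ /=.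
  have : x \in [seq p <- s j | p.1 \notin prev] by rewrite E mem_head.
  by rewrite mem_filter => /andP [].
pose L := fix L j := match j with 0 => [::] | j'.+1 => rcons (L j') (pp j' (unzip1 (L j'))) end.
pose P j := pp j (unzip1 (L j)).
have HL : forall j, L j = map P (iota 0 j).
  elim=> [|j IH] //.
  rewrite -addn1 iotaD map_cat /= -IH add0n cats1.
  by rewrite addn1.
have HP1 : forall j, P j \in s j /\ (P j).1 \notin unzip1 (L j).
  by move=> j; apply: Hpp; rewrite HL !size_map size_iota.
have Hinj : forall i j, (i < j)%N -> (P i).1 != (P j).1.
  move=> i j Hij; apply/negP => /eqP E.
  have [_ H] := HP1 j; move: H; rewrite -E HL; apply/negP/negPn.
  apply: map_f; apply: map_f; by rewrite mem_iota.
have HPF : forall j, (P j).2 \in F (P j).1.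
  move=> j; have [H _] := HP1 j.
  have [_ _ Hs3 _] := proj2_sig (Xs j).
  exact: (allP Hs3 _ H).
have Hf : forall n, exists y, y \in F n /\ forall j, (P j).1 = n -> y = (P j).2.
  move=> n; case: (classic (exists j, (P j).1 = n)) => [[j Hj]|Hno].
    exists (P j).2; split; first by rewrite -Hj.
    move=> j' Hj'; case: (ltngtP j j') => Hc.
    - by move: (Hinj _ _ Hc); rewrite Hj Hj' eqxx.
    - by move: (Hinj _ _ Hc); rewrite Hj Hj' eqxx.
    - by rewrite Hc.
  exists (head \top (F n)); split.
    by move: (Fne n); case: (F n) => // x r _; rewrite mem_head.
  by move=> j Hj; exfalso; apply: Hno; exists j.
have [f Hfs] : exists f : nat -> T, forall n, f n \in F n /\
    forall j, (P j).1 = n -> f n = (P j).2.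
  exact: (choice _ Hf).
exists f; split; first by move=> n; exact: (Hfs n).1.
split; first by move=> x _; exact: lex1.
move=> y Hy; apply: Hsup.2 => x [j ->].
have [_ _ _ ->] := proj2_sig (Xs j).
have [H _] := HP1 j.
apply: le_trans (meets_inf_seq (fun p : nat * T => p.2) H isT) _.
rewrite -((Hfs (P j).1).2 j erefl).
by apply: Hy; exists (P j).1.
Qed.
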